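(* Let $\mathcal{M}=(N,\mathcal{I})$ be a matroid or a $p$-matchoid, let $f:2^N\to\mathbb{R}$ be a normalized submodular function, let $\varepsilon\in(0,1/3)$, and let $\lambda\ge0$ satisfy $(1-\varepsilon)\lambda\le f(\{e\})\le\lambda$ for all $e\in N$. For $\delta\in[0,1]$ let $S_\delta$ denote a random subset of $N$ containing each element independently with probability $\delta$, and consider the two conditions (C1) $\mathbb{E}\bigl|\{e\in N: f_{S_\delta}(e)\le(1-\varepsilon)\lambda\}\bigr|\le\varepsilon|N|$, and (C2) $\mathbb{E}|\mathrm{span}(S_\delta)|\le\varepsilon|N|$. Suppose some $\delta\in[0,1]$ satisfies both, and let $\delta$ be the largest such value. Let $S=S_\delta$ and $I=\{e\in S: f_{S\setminus\{e\}}(e)\ge(1-\varepsilon)\lambda\text{ and } e\notin\mathrm{span}(S\setminus\{e\})\}$. Then: (i) $I\subseteq S$, $I\in\mathcal{I}$ always, and $\mathbb{E}[f(I)]\ge(1-3\varepsilon)\lambda\,\mathbb{E}|S|$; in particular $(I,S)$ is a $(1-3\varepsilon)$-greedy block with respect to $\mathcal{M}$ and $f$; (ii) $\mathbb{E}\bigl|\{e\in N\setminus\mathrm{span}(S): f_S(e)>(1-\varepsilon)\lambda\}\bigr|\le(1-\varepsilon)|N|$.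
   Context: $f$ is normalized if $f(\emptyset)=0$ and submodular if $f(A)+f(B)\ge f(A\cup B)+f(A\cap B)$; $f_S(e)=f(S\cup\{e\})-f(S)$ (so $f_S(e)=0$ if $e\in S$). For a matroid, $\mathrm{span}(S)=\{e:\mathrm{rank}(S\cup\{e\})=\mathrm{rank}(S)\}$. A $p$-matchoid is given by matroids $\mathcal{M}_j=(N_j,\mathcal{I}_j)$, $N_j\subseteq N$, each element in at most $p$ of the $N_j$, with $\mathcal{I}=\{S: S\cap N_j\in\mathcal{I}_j\ \forall j\}$; its span is $\mathrm{span}(S)=\bigcup_j\mathrm{span}_j(S\cap N_j)$, where $\mathrm{span}_j$ is the span in $\mathcal{M}_j$. For a set system $(N,\mathcal{I})$, a real-valued $f$ and $\alpha\in[0,1]$, an $\alpha$-greedy block is a random pair $(I,S)$ with $I\subseteq S\subseteq N$, $I\in\mathcal{I}$ always, and $\mathbb{E}[f(I)]\ge\alpha\,\mathbb{E}[|S|]\cdot\max\{0,\max_{e\in N}f(\{e\})\}$. *)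

(* Defs.v *)
From HB Require Import structures.
From mathcomp Require Import all_boot all_order all_algebra.
Set Implicit Arguments. Unset Strict Implicit. Unset Printing Implicit Defensive.
Import Order.TTheory GRing.Theory Num.Theory.
Local Open Scope ring_scope.

(* The ground set N is the whole finite type T. *)

Record matroid (T : finType) := Matroid {
  mground : {set T};
  mindep : {set T} -> bool;
  mindep0 : mindep set0;
  mindep_ground : forall A : {set T}, mindep A -> A \subset mground;
  mindep_sub : forall A B : {set T}, A \subset B -> mindep B -> mindep A;
  mindep_exch : forall A B : {set T}, mindep A -> mindep B -> (#|A| < #|B|)%N ->
      exists2 x, x \in B :\: A & mindep (x |: A)
}.

Definition mrank (T : finType) (M : matroid T) (S : {set T}) : nat :=
  \max_(A : {set T} | (A \subset S) && mindep M A) #|A|.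

Definition mspan (T : finType) (M : matroid T) (S : {set T}) : {set T} :=
  [set e in mground M | mrank M (e |: S) == mrank M S].

Definition is_matchoid (T J : finType) (p : nat) (M : J -> matroid T) : Prop :=
  forall e : T, (#|[set j | e \in mground (M j)]| <= p)%N.

Definition matchoid_indep (T J : finType) (M : J -> matroid T) (S : {set T}) : bool :=
  [forall j, mindep (M j) (S :&: mground (M j))].

Definition matchoid_span (T J : finType) (M : J -> matroid T) (S : {set T}) : {set T} :=
  \bigcup_(j : J) mspan (M j) (S :&: mground (M j)).

Definition normalized (T : finType) (R : numDomainType) (f : {set T} -> R) : Prop :=
  f set0 = 0.

Definition submodular (T : finType) (R : numDomainType) (f : {set T} -> R) : Prop :=
  forall A B : {set T}, f (A :|: B) + f (A :&: B) <= f A + f B.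

Definition marg (T : finType) (R : numDomainType) (f : {set T} -> R)
  (S : {set T}) (e : T) : R := f (e |: S) - f S.

(** S_delta: each element of T independently with probability delta.
    Probability of a given realisation S, and expectation. *)
Definition prob_delta (T : finType) (R : numDomainType) (delta : R) (S : {set T}) : R :=
  delta ^+ #|S| * (1 - delta) ^+ (#|T| - #|S|).

Definition Exp_delta (T : finType) (R : numDomainType) (delta : R)
  (g : {set T} -> R) : R :=
  \sum_(S : {set T}) prob_delta delta S * g S.

(** alpha-greedy block for a random pair (I(S), S) with S drawn according to
    the weights [w]; independence (and I ⊆ S) required for every outcome. *)
Definition greedy_block (T : finType) (R : realDomainType)
  (indep : {set T} -> bool) (f : {set T} -> R) (alpha : R)
  (w : {set T} -> R) (I : {set T} -> {set T}) : Prop :=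
  (forall S, (I S \subset S) && indep (I S)) /\
  alpha * (\sum_(S : {set T}) w S * (#|S|%:R)) *
     Num.max 0 (\big[Num.max/0]_(e : T) f [set e])
  <= \sum_(S : {set T}) w S * f (I S).

Definition cond1 (T : finType) (R : realDomainType) (f : {set T} -> R)
  (eps lam delta : R) : Prop :=
  Exp_delta delta (fun S => #|[set e | marg f S e <= (1 - eps) * lam]|%:R)
    <= eps * #|T|%:R.

Definition cond2 (T J : finType) (R : realDomainType) (M : J -> matroid T)
  (eps delta : R) : Prop :=
  Exp_delta delta (fun S => #|matchoid_span M S|%:R) <= eps * #|T|%:R.

Definition Iset (T J : finType) (R : realDomainType) (M : J -> matroid T)
  (f : {set T} -> R) (eps lam : R) (S : {set T}) : {set T} :=
  [set e in S | ((1 - eps) * lam <= marg f (S :\ e) e)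
                && (e \notin matchoid_span M (S :\ e))].

(* Main.v *)
Require Import Defs.
From HB Require Import structures.
From mathcomp Require Import all_boot all_order all_algebra.
From mathcomp Require Import polyrcf ring lra.
Set Implicit Arguments. Unset Strict Implicit. Unset Printing Implicit Defensive.
Import Order.TTheory GRing.Theory Num.Theory.
Local Open Scope ring_scope.

Lemma pair_sum (R : rcfType) (T : finType) (e : T) (P : {set T} -> bool)
  (F : {set T} -> R) :
  \sum_(S : {set T} | (e \in S) && P S) F S =
  \sum_(S : {set T} | (e \notin S) && P (e |: S)) F (e |: S).
Proof.
rewrite (reindex_onto (fun S => e |: S) (fun S => S :\ e)); last first.
  by move=> S /andP[eS _]; rewrite setD1K.
apply: eq_bigl => S; rewrite setU11 /=.
case: (boolP (e \in S)) => eS /=.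
  case: eqP => [h|]; last by rewrite andbF.
  by move: eS; rewrite -h setD11.
by rewrite setU1K // eqxx andbT.
Qed.

Lemma prob_ge0 (R : rcfType) (T : finType) (d : R) (S : {set T}) :
  0 <= d <= 1 -> 0 <= prob_delta d S.
Proof.
by case/andP=> d0 d1; rewrite /prob_delta mulr_ge0 // exprn_ge0 // subr_ge0.
Qed.

Lemma prob_add (R : rcfType) (T : finType) (d : R) (e : T) (S : {set T}) :
  e \notin S -> (1 - d) * prob_delta d (e |: S) = d * prob_delta d S.
Proof.
move=> eS; rewrite /prob_delta cardsU1 eS /= add1n.
have h : (#|S|.+1 <= #|T|)%N by have := max_card (e |: S); rewrite cardsU1 eS.
rewrite -(subnSK h) !exprS; ring.
Qed.

Lemma exp_card (R : rcfType) (T : finType) (d : R) (A : {set T} -> {set T}) :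
  Exp_delta d (fun S => #|A S|%:R) =
  \sum_(e : T) \sum_(S : {set T} | e \in A S) prob_delta d S.
Proof.
rewrite /Exp_delta.
transitivity (\sum_(S : {set T}) \sum_(e : T) (if e \in A S then prob_delta d S else 0)).
  apply: eq_bigr => S _; rewrite -big_mkcond /= -[in RHS](mulr1 (prob_delta d S)).
  by rewrite -mulr_sumr sumr_const.
rewrite exchange_big; apply: eq_bigr => e _; by rewrite -big_mkcond.
Qed.
Lemma prob_total (R : rcfType) (T : finType) (d : R) :
  \sum_(S : {set T}) prob_delta d S = 1.
Proof.
rewrite (partition_big (fun S : {set T} => inord #|S| : 'I_#|T|.+1) xpredT) //=.
transitivity (\sum_(k < #|T|.+1) ((1 - d) ^+ (#|T| - k) * d ^+ k) *+ 'C(#|T|, k)).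
  apply: eq_bigr => k _.
  rewrite (eq_bigr (fun _ => (1 - d) ^+ (#|T| - k) * d ^+ k)); last first.
    move=> S /eqP <-; rewrite /prob_delta inordK ?ltnS ?max_card // mulrC //.
  rewrite sumr_const; congr (_ *+ _).
  rewrite -card_draws; apply: eq_card => S; rewrite !inE.
  apply/eqP/eqP => [H|H]; first by rewrite -H /= inordK // ltnS max_card.
  by rewrite H inord_val.
by rewrite -exprDn subrK expr1n.
Qed.
Lemma key (R : rcfType) (T : finType) (d : R) (Q Q' : {set T} -> T -> bool) :
  0 <= d <= 1 ->
  (forall (S : {set T}) (e : T), e \in S -> Q (S :\ e) e -> Q' S e) ->
  (forall (S : {set T}) (e : T), e \notin S -> Q S e -> Q' S e) ->
  Exp_delta d (fun S => #|[set e in S | Q (S :\ e) e]|%:R)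
    <= d * Exp_delta d (fun S => #|[set e | Q' S e]|%:R).
Proof.
move=> d01 H1 H2; rewrite !exp_card.
set L := \sum_(e : T) _.
have HL : L = \sum_(e : T) \sum_(S : {set T} | (e \notin S) && Q S e)
     prob_delta d (e |: S).
  apply: eq_bigr => e _.
  rewrite (eq_bigl (fun S : {set T} => (e \in S) && Q (S :\ e) e)); last by move=> S; rewrite inE.
  rewrite pair_sum; apply: eq_bigl => S; case: (boolP (e \in S)) => //= eS.
  by rewrite setU1K.
set X := \sum_(e : T) \sum_(S : {set T} | (e \notin S) && Q S e) prob_delta d S.
have h1 : (1 - d) * L = d * X.
  rewrite HL !mulr_sumr; apply: eq_bigr => e _; rewrite !mulr_sumr.
  by apply: eq_bigr => S /andP[eS _]; apply: prob_add.
have h2 : L + X <= \sum_(e : T) \sum_(S : {set T} | e \in [set e | Q' S e])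
     prob_delta d S.
  rewrite /L /X -big_split /=; apply: ler_sum => e _.
  rewrite [X in X + _ <= _]big_mkcond [X in _ + X <= _]big_mkcond.
  rewrite [X in _ <= X]big_mkcond -big_split; apply: ler_sum => S _ /=.
  rewrite !inE; have p0 := prob_ge0 S d01.
  case: (boolP (e \in S)) => eS /=.
    case Hq: (Q (S :\ e) e) => /=; first by rewrite (H1 _ _ eS Hq) addr0.
    by rewrite add0r; case: (Q' S e).
  case Hq: (Q S e) => /=; first by rewrite (H2 _ _ eS Hq) add0r.
  by rewrite add0r; case: (Q' S e).
have -> : L = d * (L + X) by rewrite mulrDr -h1; ring.
by rewrite ler_wpM2l //; case/andP: d01.
Qed.

Lemma exp_le (R : rcfType) (T : finType) (d : R) (g h : {set T} -> R) :
  0 <= d <= 1 -> (forall S, g S <= h S) -> Exp_delta d g <= Exp_delta d h.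
Proof.
move=> d01 gh; apply: ler_sum => S _; apply: ler_wpM2l; last exact: gh.
exact: prob_ge0.
Qed.

Lemma exp_const (R : rcfType) (T : finType) (d : R) (c : R) :
  Exp_delta d (fun _ : {set T} => c) = c.
Proof. by rewrite /Exp_delta -mulr_suml prob_total mul1r. Qed.

Lemma exp_B (R : rcfType) (T : finType) (d : R) (g h : {set T} -> R) :
  Exp_delta d (fun S => g S - h S) = Exp_delta d g - Exp_delta d h.
Proof.
by rewrite /Exp_delta -sumrB; apply: eq_bigr => S _; rewrite mulrBr.
Qed.

Lemma exp_Z (R : rcfType) (T : finType) (d : R) (c : R) (g : {set T} -> R) :
  Exp_delta d (fun S => c * g S) = c * Exp_delta d g.
Proof.
by rewrite /Exp_delta mulr_sumr; apply: eq_bigr => S _; rewrite mulrCA.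
Qed.

Lemma prob_in (R : rcfType) (T : finType) (d : R) (e : T) :
  \sum_(S : {set T} | e \in S) prob_delta d S = d.
Proof.
set Z := \sum_(S : {set T} | e \in S) _.
set W := \sum_(S : {set T} | e \notin S) prob_delta d S.
have hZW : Z + W = 1 by by rewrite -(prob_total T d) [RHS](bigID (fun S : {set T} => e \in S)).
have h : (1 - d) * Z = d * W.
  rewrite /Z (eq_bigl (fun S : {set T} => (e \in S) && true)); last by move=> S; rewrite andbT.
  rewrite pair_sum mulr_sumr /W mulr_sumr.
  apply: eq_big => [S|S]; first by rewrite andbT.
  by rewrite andbT => eS; apply: prob_add.
have -> : Z = d * (Z + W) by rewrite mulrDr -h; ring.
by rewrite hZW mulr1.
Qed.

Lemma exp_cardS (R : rcfType) (T : finType) (d : R) :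
  Exp_delta d (fun S : {set T} => #|S|%:R) = d * #|T|%:R.
Proof.
rewrite (exp_card d (fun S => S)).
rewrite (eq_bigr (fun _ => d)); last by move=> e _; apply: prob_in.
by rewrite sumr_const mulr_natr.
Qed.

Lemma dimret (R : rcfType) (T : finType) (f : {set T} -> R) (A B : {set T}) (e : T) :
  submodular f -> A \subset B -> e \notin B -> marg f B e <= marg f A e.
Proof.
move=> sub AB eB; have := sub (e |: A) B.
have -> : (e |: A) :|: B = e |: B.
  apply/setP => x; rewrite !inE; have := subsetP AB x.
  by case: (x == e); case: (x \in A); case: (x \in B) => //= ->.
have -> : (e |: A) :&: B = A.
  apply/setP => x; rewrite !inE; have := subsetP AB x.
  case: (eqVneq x e) => [->|_] /=; last by case: (x \in A); case: (x \in B) => // ->.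
  by rewrite (negbTE eB); case: (e \in A) => // ->.
rewrite /marg => h; lra.
Qed.

Lemma chain (R : rcfType) (T : finType) (f : {set T} -> R) (c : R) (S : {set T}) :
  normalized f -> submodular f -> forall I : {set T}, I \subset S ->
  (forall e, e \in I -> c <= marg f (S :\ e) e) -> c * #|I|%:R <= f I.
Proof.
move=> f0 sub I; have [n] := ubnP #|I|; elim: n I => // n IH I.
case: (set_0Vmem I) => [-> _ _ _|[e eI] ltI IS Hc].
  by rewrite cards0 mulr0 f0.
have e' : e \notin I :\ e by rewrite setD11.
have IS' : I :\ e \subset S :\ e by apply: setSD.
have h1 := IH (I :\ e) _ (subset_trans (subsetDl _ _) IS)
   (fun x xI => Hc x (subsetP (subsetDl _ _) x xI)).
have eS : e \notin S :\ e by rewrite setD11.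
have h2 := dimret sub IS' eS.
have h3 := Hc e eI.
have eq1 : I = e |: (I :\ e) by rewrite setD1K.
have hc : #|I| = (#|I :\ e|).+1 by rewrite eq1 cardsU1 e' /= add1n setU1K.
move: h2; rewrite /marg -eq1 => h2.
rewrite hc -addn1 natrD mulrDr mulr1.
have : c * #|I :\ e|%:R <= f (I :\ e) by apply: h1; rewrite -ltnS -hc.
move: h3; rewrite /marg; lra.
Qed.

Lemma rank_witness (T : finType) (M : matroid T) (S : {set T}) :
  exists2 B : {set T}, (B \subset S) && mindep M B & #|B| = mrank M S.
Proof.
have gt0 : (0 < #|[pred B : {set T} | (B \subset S) && mindep M B]|)%N.
  by apply/card_gt0P; exists set0; rewrite inE sub0set mindep0.
have [B HB HBm] := eq_bigmax_cond (fun B : {set T} => #|B|) gt0.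
by exists B; [exact: HB | rewrite /mrank HBm].
Qed.

Lemma indep_le_rank (T : finType) (M : matroid T) (S B : {set T}) :
  B \subset S -> mindep M B -> (#|B| <= mrank M S)%N.
Proof.
move=> BS iB; rewrite /mrank.
apply: (leq_bigmax_cond (F := fun B : {set T} => #|B|) B); by rewrite BS iB.
Qed.

Lemma rank_mono (T : finType) (M : matroid T) (A B : {set T}) :
  A \subset B -> (mrank M A <= mrank M B)%N.
Proof.
move=> AB; have [W /andP[WA iW] <-] := rank_witness M A.
exact: indep_le_rank (subset_trans WA AB) iW.
Qed.

Lemma coloop_indep (T : finType) (M : matroid T) (X K : {set T}) :
  X \subset mground M -> K \subset X ->
  (forall e, e \in K -> e \notin mspan M (X :\ e)) -> mindep M K.
Proof.
move=> Xg KX HK; have [B /andP[BX iB] HB] := rank_witness M X.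
apply: (mindep_sub _ iB); apply/subsetP => e eK.
apply/negPn/negP => eB.
have eX := subsetP KX e eK.
have BXe : B \subset X :\ e.
  apply/subsetP => x xB; rewrite !inE (subsetP BX x xB) andbT.
  by apply/eqP => h; move: eB; rewrite -h xB.
have h1 := indep_le_rank BXe iB.
have h2 := rank_mono M (subsetDl X [set e]).
have := HK e eK; rewrite inE (subsetP Xg e eX) /= setD1K //.
by rewrite eqn_leq h2 -HB h1.
Qed.

Definition expP (R : rcfType) (T : finType) (g : {set T} -> R) : {poly R} :=
  \sum_(S : {set T}) ('X ^+ #|S| * (1 - 'X) ^+ (#|T| - #|S|)) * (g S)%:P.

Lemma expP_eval (R : rcfType) (T : finType) (g : {set T} -> R) (d : R) :
  (expP g).[d] = Exp_delta d g.
Proof.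
rewrite /expP horner_sum; apply: eq_bigr => S _.
by rewrite /prob_delta !hornerE.
Qed.

Lemma exp_cont (R : rcfType) (T : finType) (g : {set T} -> R) (x K : R) :
  Exp_delta x g < K ->
  exists2 eta, 0 < eta & forall y, `|y - x| < eta -> Exp_delta y g < K.
Proof.
move=> hx; have e0 : 0 < K - Exp_delta x g by rewrite subr_gt0.
have [eta eta0 H] := poly_cont x (expP g) e0.
exists eta => // y hy; have := H y hy; rewrite !expP_eval => h.
have := ler_norm (Exp_delta y g - Exp_delta x g); lra.
Qed.

Lemma bigmax_le_lam (R : rcfType) (T : finType) (F : T -> R) (lam : R) :
  0 <= lam -> (forall e, F e <= lam) ->
  Num.max 0 (\big[Num.max/0]_(e : T) F e) <= lam.
Proof.
move=> l0 hF; rewrite ge_max l0 /=.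
elim/big_ind: _ => //; first by move=> x y hx hy; rewrite ge_max hx hy.
Qed.

Lemma setU1_in (T : finType) (e : T) (S : {set T}) : e \in S -> e |: S = S.
Proof. by move=> eS; apply/setP => x; rewrite !inE; case: eqP => // ->. Qed.

Lemma card_compl (R : rcfType) (T : finType) (A B : {set T}) :
  A \subset ~: B -> (#|A|%:R : R) <= #|T|%:R - #|B|%:R.
Proof.
move=> AB; have h := subset_leq_card AB.
rewrite lerBrDr -natrD ler_nat.
by rewrite -(cardsC B) addnC leq_add2l.
Qed.

Unset Implicit Arguments.

Theorem mainTheorem5 (R : rcfType) (T J : finType) (p : nat)
  (M : J -> matroid T) (f : {set T} -> R) (eps lam delta : R) :
  is_matchoid p M ->
  normalized f -> submodular f ->
  0 < eps -> eps < 3^-1 ->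
  0 <= lam ->
  (forall e : T, (1 - eps) * lam <= f [set e] /\ f [set e] <= lam) ->
  0 <= delta <= 1 ->
  cond1 f eps lam delta -> cond2 M eps delta ->
  (forall d : R, 0 <= d <= 1 -> cond1 f eps lam d -> cond2 M eps d -> d <= delta) ->
  [/\ (forall S : {set T},
         (Iset M f eps lam S \subset S) && matchoid_indep M (Iset M f eps lam S)),
      (1 - 3 * eps) * lam * Exp_delta delta (fun S : {set T} => #|S|%:R)
        <= Exp_delta delta (fun S : {set T} => f (Iset M f eps lam S)),
      greedy_block (matchoid_indep M) f (1 - 3 * eps) (prob_delta delta)
        (Iset M f eps lam)
    & Exp_delta delta (fun S : {set T} =>
        #|[set e | (e \notin matchoid_span M S) && ((1 - eps) * lam < marg f S e)]|%:R)
      <= (1 - eps) * #|T|%:R].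
Proof.
move=> Hm f0 fsub e0 e3 l0 Hs d01 C1 C2 Hmax.
have e1 : eps < 1 by lra.
have c0 : 0 <= (1 - eps) * lam by rewrite mulr_ge0 // subr_ge0 ltW.
have [d0 d1] := andP d01.
have n0 : 0 <= (#|T|%:R : R) by [].
have HI : forall S : {set T},
    (Iset M f eps lam S \subset S) && matchoid_indep M (Iset M f eps lam S).
  move=> S; apply/andP; split.
    by apply/subsetP => x; rewrite inE => /andP[].
  apply/forallP => j.
  apply: (@coloop_indep _ (M j) (S :&: mground (M j))).
  - exact: subsetIr.
  - by apply: setSI; apply/subsetP => x; rewrite inE => /andP[].
  move=> e; rewrite inE => /andP[eI eg]; move: eI.
  rewrite inE => /andP[eS /andP[_ hsp]].
  apply/negP => hin; move/negP: hsp; apply.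
  rewrite /matchoid_span; apply/bigcupP; exists j => //.
  by rewrite setIDAC.
set c := (1 - eps) * lam.
set n := (#|T|%:R : R).
have HES : Exp_delta delta (fun S : {set T} => #|S|%:R) = delta * n by apply: exp_cardS.
have hbf : Exp_delta delta (fun S : {set T} =>
      #|[set e in S | marg f (S :\ e) e < c]|%:R) <= delta * (eps * n).
  apply: le_trans (ler_wpM2l d0 C1).
  apply: (key (Q := fun S e => marg f S e < c)
              (Q' := fun S e => marg f S e <= c)) => //.
  - move=> S e eS _; rewrite /marg setU1_in // subrr //.
  - by move=> S e _ /ltW.
have hbs : Exp_delta delta (fun S : {set T} =>
      #|[set e in S | e \in matchoid_span M (S :\ e)]|%:R) <= delta * (eps * n).
  have eqs : Exp_delta delta (fun S : {set T} => #|[set e | e \in matchoid_span M S]|%:R)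
      = Exp_delta delta (fun S : {set T} => #|matchoid_span M S|%:R).
    by apply: eq_bigr => S _; congr (_ * _%:R); apply: eq_card => x; rewrite inE.
  apply: le_trans (ler_wpM2l d0 C2); rewrite -eqs.
  apply: (key (Q := fun S e => e \in matchoid_span M S)
              (Q' := fun S e => e \in matchoid_span M S)) => //.
  move=> S e eS /bigcupP[j _ hj]; apply/bigcupP; exists j => //.
  move: hj; rewrite !inE => /andP[eg _]; rewrite eg /=.
  by rewrite setU1_in // inE eS eg.
have hcard : forall S : {set T}, #|S|%:R -
      #|[set e in S | marg f (S :\ e) e < c]|%:R -
      #|[set e in S | e \in matchoid_span M (S :\ e)]|%:R
      <= (#|Iset M f eps lam S|%:R : R).
  move=> S.
  have sub : S \subset (Iset M f eps lam S :|: [set e in S | marg f (S :\ e) e < c])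
                  :|: [set e in S | e \in matchoid_span M (S :\ e)].
    apply/subsetP => e eS; rewrite !inE eS /=.
    case: (lerP c (marg f (S :\ e) e)) => //= _.
    by case: (e \in matchoid_span M (S :\ e)).
  have h := subset_leq_card sub.
  have h2 := (leq_card_setU (Iset M f eps lam S :|: [set e in S | marg f (S :\ e) e < c])
                  [set e in S | e \in matchoid_span M (S :\ e)]).1.
  have h3 := (leq_card_setU (Iset M f eps lam S) [set e in S | marg f (S :\ e) e < c]).1.
  have h4 : (#|S| <= #|Iset M f eps lam S| +
         #|[set e in S | (marg f (S :\ e) e < c)%R]| +
         #|[set e in S | e \in matchoid_span M (S :\ e)]|)%N.
    apply: (leq_trans h); apply: (leq_trans h2); by rewrite leq_add2r.
  by rewrite lerBlDr lerBlDr -!natrD ler_nat addnAC.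
have hchain : forall S : {set T},
    c * #|Iset M f eps lam S|%:R <= f (Iset M f eps lam S).
  move=> S; apply: (chain (S := S)) => //; first by case/andP: (HI S).
  by move=> e; rewrite inE => /andP[_ /andP[]].
have Hii : (1 - 3 * eps) * lam * Exp_delta delta (fun S : {set T} => #|S|%:R)
        <= Exp_delta delta (fun S : {set T} => f (Iset M f eps lam S)).
  apply: le_trans (exp_le d01 hchain).
  rewrite exp_Z.
  have hI := exp_le d01 hcard.
  rewrite !exp_B HES in hI.
  apply: le_trans (ler_wpM2l c0 hI).
  have hab : delta * n - 2 * (delta * (eps * n)) <=
     delta * n - Exp_delta delta (fun S : {set T} =>
      #|[set e in S | marg f (S :\ e) e < c]|%:R) - Exp_delta delta (fun S : {set T} =>
      #|[set e in S | e \in matchoid_span M (S :\ e)]|%:R) by lra.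
  apply: le_trans (ler_wpM2l c0 hab).
  rewrite HES -subr_ge0.
  have -> : c * (delta * n - 2 * (delta * (eps * n))) - (1 - 3 * eps) * lam * (delta * n)
      = 2 * (eps * eps) * (lam * (delta * n)) by rewrite /c; ring.
  by rewrite !mulr_ge0 // ?mulr_ge0 // ltW.
have Hiii : greedy_block (matchoid_indep M) f (1 - 3 * eps) (prob_delta delta)
        (Iset M f eps lam).
  split => //.
  apply: le_trans Hii.
  have hm := bigmax_le_lam (F := fun e => f [set e]) l0 (fun e => proj2 (Hs e)).
  have h3 : 0 <= 1 - 3 * eps by lra.
  have hE : 0 <= \sum_(S : {set T}) prob_delta delta S * #|S|%:R.
    by rewrite -/(Exp_delta delta _) HES mulr_ge0.
  rewrite -/(Exp_delta delta (fun S : {set T} => #|S|%:R)).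
  apply: le_trans (ler_wpM2l _ hm) _; first by rewrite mulr_ge0 // HES mulr_ge0.
  by rewrite le_eqVlt; apply/orP; left; apply/eqP; ring.
set G := fun S : {set T} =>
   [set e | (e \notin matchoid_span M S) && ((1 - eps) * lam < marg f S e)].
have hG1 : forall S : {set T},
    (#|G S|%:R : R) <= n - #|[set e | marg f S e <= c]|%:R.
  move=> S; apply: card_compl; apply/subsetP => e; rewrite !inE.
  by case/andP=> _ h; rewrite -ltNge.
have hG2 : forall S : {set T},
    (#|G S|%:R : R) <= n - #|matchoid_span M S|%:R.
  by move=> S; apply: card_compl; apply/subsetP => e; rewrite !inE => /andP[].
have hG3 : forall S : {set T}, (#|G S|%:R : R) <= n - #|S|%:R.
  move=> S; apply: card_compl; apply/subsetP => e; rewrite !inE.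
  case/andP=> _; apply: contraTN => eS.
  by rewrite /marg setU1_in // subrr -leNgt.
split => //.
rewrite -/(Exp_delta delta (fun S => #|G S|%:R)).
case: (ltrP delta 1) => hd1; last first.
  have hd : delta = 1 by apply/le_anti; rewrite d1 hd1.
  apply: le_trans (exp_le d01 hG3) _.
  rewrite exp_B exp_const HES hd mul1r subrr.
  by rewrite mulr_ge0 // subr_ge0 ltW.
have : eps * n <= Exp_delta delta (fun S : {set T} => #|[set e | marg f S e <= c]|%:R)
    \/ eps * n <= Exp_delta delta (fun S : {set T} => #|matchoid_span M S|%:R).
  case: (lerP (eps * n) (Exp_delta delta (fun S : {set T} => #|[set e | marg f S e <= c]|%:R))) => hA; first by left.
  case: (lerP (eps * n) (Exp_delta delta (fun S : {set T} => #|matchoid_span M S|%:R))) => hB; first by right.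
  exfalso.
  have [eta1 eta10 H1] := exp_cont hA.
  have [eta2 eta20 H2] := exp_cont hB.
  set m := Num.min (Num.min eta1 eta2) (1 - delta).
  have hm0 : 0 < m by rewrite !lt_min eta10 eta20 subr_gt0 hd1.
  have hm1 : m <= eta1 by rewrite /m !ge_min lexx.
  have hm2 : m <= eta2 by rewrite /m !ge_min lexx orbT.
  have hm3 : m <= 1 - delta by rewrite /m !ge_min lexx orbT.
  set y := delta + m / 2.
  have hy : `|y - delta| = m / 2.
    have -> : y - delta = m / 2 by rewrite /y; ring.
    by rewrite ger0_norm // divr_ge0 // ltW.
  have hyd : delta < y by rewrite /y ltrDl divr_gt0.
  have y01 : 0 <= y <= 1 by apply/andP; split; rewrite /y; lra.
  have hlt1 : `|y - delta| < eta1 by rewrite hy; lra.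
  have hlt2 : `|y - delta| < eta2 by rewrite hy; lra.
  have := Hmax y y01 (ltW (H1 y hlt1)) (ltW (H2 y hlt2)); lra.
case=> [hA|hB].
  apply: le_trans (exp_le d01 hG1) _.
  rewrite exp_B exp_const; lra.
apply: le_trans (exp_le d01 hG2) _.
rewrite exp_B exp_const; lra.
Qed.
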